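(* Let $\mathbb{K}$ be $\mathbb{R}$ or $\mathbb{C}$. Let $U$ be a $2$-dimensional $\mathbb{K}$-vector space equipped with a chosen area form (nonzero alternating bilinear form) $\omega$, and let $SL(U)$ be the group of linear automorphisms of $U$ preserving $\omega$, acting on $U\otimes V^*$ via its action on the first factor and hence on $\bigwedge^4(U\otimes V^* )$. Then for every finite-dimensional $\mathbb{K}$-vector space $V$ there is an isomorphism, natural in $V$, $$\mathcal{R}(V)\;\simeq\;\Big(\textstyle\bigwedge^4(U\otimes V^* )\Big)^{SL(U)},$$ where the right-hand side denotes the subspace of $SL(U)$-invariant elements.
   Context: For a finite-dimensional vector space $V$, $\mathcal{R}(V)\subset (V^* )^{\otimes 4}$ denotes the subspace of tetralinear forms $R$ on $V$ satisfying, for all $a,b,c,d\in V$: (1) $R(a,b,c,d)=-R(b,a,c,d)=-R(a,b,d,c)$, and (2) $R(a,b,c,d)+R(b,c,a,d)+R(c,a,b,d)=0$ (the algebraic symmetries of a Riemann curvature tensor). *)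

(* Defs.v *)
From HB Require Import structures.
From mathcomp Require Import all_boot all_algebra.
From mathcomp Require Import complex.
From mathcomp Require Import reals.

Set Implicit Arguments.
Unset Strict Implicit.
Unset Printing Implicit Defensive.
Import GRing.Theory Num.Theory.
Local Open Scope ring_scope.

Definition scalar_field (R : realType) (b : bool) : numFieldType :=
  if b then (R : numFieldType) else (complex R : numFieldType).

(* 4-tensors (components w.r.t. a basis indexed by I) *)
Notation tensor4 K I := {ffun (I * I * I * I)%type -> K}.

(* R(V) for V = K^n, in components w.r.t. the standard basis *)
Definition curvature_tensor (K : fieldType) (n : nat) (R : tensor4 K 'I_n) : Prop :=
  forall a b c d : 'I_n,
    R (a, b, c, d) = - R (b, a, c, d) /\
    R (a, b, c, d) = - R (a, b, d, c) /\
    R (a, b, c, d) + R (b, c, a, d) + R (c, a, b, d) = 0.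

(* Lambda^4 X modelled as the alternating 4-tensors in X^{(x)4} (char 0) *)
Definition alternating4 (K : fieldType) (I : finType) (T : tensor4 K I) : Prop :=
  forall x y z w : I,
    T (x, y, z, w) = - T (y, x, z, w) /\
    T (x, y, z, w) = - T (x, z, y, w) /\
    T (x, y, z, w) = - T (x, y, w, z).

(* area form on U = K^2, given by its Gram matrix *)
Definition area_form (K : fieldType) (Om : 'M[K]_2) : Prop :=
  Om^T = - Om /\ (forall i, Om i i = 0) /\ Om != 0.

Definition in_SL (K : fieldType) (Om g : 'M[K]_2) : Prop :=
  g \in unitmx /\ g^T *m Om *m g = Om.

(* action of g on (U (x) V^* )^{(x)4}, basis e_a (x) xi_i indexed by (a, i),
   g acting on the U factors: g e_b = sum_a g a b e_a *)
Definition sl_act (K : fieldType) (n : nat) (g : 'M[K]_2)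
    (T : tensor4 K ('I_2 * 'I_n)%type) : tensor4 K ('I_2 * 'I_n)%type :=
  [ffun x => let '(x1, x2, x3, x4) := x in
     \sum_(b1 < 2) \sum_(b2 < 2) \sum_(b3 < 2) \sum_(b4 < 2)
       g x1.1 b1 * g x2.1 b2 * g x3.1 b3 * g x4.1 b4 *
       T ((b1, x1.2), (b2, x2.2), (b3, x3.2), (b4, x4.2))].

Definition sl_invariant (K : fieldType) (n : nat) (Om : 'M[K]_2)
    (T : tensor4 K ('I_2 * 'I_n)%type) : Prop :=
  forall g, in_SL Om g -> sl_act g T = T.

(* For a linear map f : K^n -> K^m with matrix A (f e_i = sum_p A p i e_p):
   pullback f^* : R(K^m) -> R(K^n) *)
Definition pullR (K : fieldType) (m n : nat) (A : 'M[K]_(m, n))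
    (R : tensor4 K 'I_m) : tensor4 K 'I_n :=
  [ffun x => let '(i, j, k, l) := x in
     \sum_(p < m) \sum_(q < m) \sum_(r < m) \sum_(s < m)
       A p i * A q j * A r k * A s l * R (p, q, r, s)].

(* induced map Lambda^4 (U (x) (K^m)^* ) -> Lambda^4 (U (x) (K^n)^* ) via
   id (x) f^*, where f^* eta_p = sum_i A p i xi_i *)
Definition pullL (K : fieldType) (m n : nat) (A : 'M[K]_(m, n))
    (T : tensor4 K ('I_2 * 'I_m)%type) : tensor4 K ('I_2 * 'I_n)%type :=
  [ffun x => let '(x1, x2, x3, x4) := x in
     \sum_(p < m) \sum_(q < m) \sum_(r < m) \sum_(s < m)
       A p x1.2 * A q x2.2 * A r x3.2 * A s x4.2 *
       T ((x1.1, p), (x2.1, q), (x3.1, r), (x4.1, s))].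

(* Main.v *)
Require Import Defs.
From HB Require Import structures.
From mathcomp Require Import all_boot all_algebra.
From mathcomp Require Import complex.
From mathcomp Require Import reals.
From mathcomp Require Import ring.
Import GRing.Theory Num.Theory.
Local Open Scope ring_scope.
Set Implicit Arguments.
Unset Strict Implicit.
Unset Printing Implicit Defensive.

Definition o0 : 'I_2 := ord0.
Definition o1 : 'I_2 := ord_max.

Lemma sum2 (K : nmodType) (F : 'I_2 -> K) : \sum_(b < 2) F b = F o0 + F o1.
Proof. by rewrite big_ord_recr big_ord1 /=; congr (F _ + F _); apply: val_inj. Qed.

Lemma ord2P (a : 'I_2) : a = o0 \/ a = o1.
Proof. case: a => [[|[|m]] Hm]; [left|right|by []]; exact: val_inj. Qed.

Lemma det22 (K : comNzRingType) (g : 'M[K]_2) :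
  \det g = g o0 o0 * g o1 o1 - g o0 o1 * g o1 o0.
Proof.
rewrite (expand_det_row _ ord0) !sum2 /cofactor !det_mx11 !mxE /=.
have -> : lift ord0 (0 : 'I_1) = o1 by apply: val_inj.
have -> : lift o1 (0 : 'I_1) = o0 by apply: val_inj.
rewrite expr0 expr1; have -> : (ord0 : 'I_2) = o0 by [].
ring.
Qed.

Definition J (K : nzRingType) (a b : 'I_2) : K :=
  if (val a == 0%N) && (val b == 1%N) then 1
  else if (val a == 1%N) && (val b == 0%N) then -1 else 0.

Lemma J00 (K : nzRingType) : J K o0 o0 = 0. Proof. by []. Qed.
Lemma J01 (K : nzRingType) : J K o0 o1 = 1. Proof. by []. Qed.
Lemma J10 (K : nzRingType) : J K o1 o0 = -1. Proof. by []. Qed.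
Lemma J11 (K : nzRingType) : J K o1 o1 = 0. Proof. by []. Qed.

Lemma Ja (K : nzRingType) a b : J K b a = - J K a b.
Proof.
by case: (ord2P a) => ->; case: (ord2P b) => ->;
  rewrite ?J00 ?J01 ?J10 ?J11 ?oppr0 ?opprK.
Qed.

Definition G (K : nzRingType) n (x : tensor4 K 'I_n) (y1 y2 y3 y4 : 'I_2 * 'I_n) : K :=
  J K y1.1 y3.1 * J K y2.1 y4.1 * x (y1.2, y2.2, y3.2, y4.2).

Definition phiT (K : nzRingType) n (x : tensor4 K 'I_n) : tensor4 K ('I_2 * 'I_n)%type :=
  [ffun t : ('I_2 * 'I_n) * ('I_2 * 'I_n) * ('I_2 * 'I_n) * ('I_2 * 'I_n) =>
   let '(y1, y2, y3, y4) := t in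
    G x y1 y2 y3 y4 - G x y1 y3 y2 y4 - G x y1 y4 y3 y2 - G x y1 y2 y4 y3
    + G x y1 y3 y4 y2 + G x y1 y4 y2 y3].


Lemma cA1 (K : fieldType) n (x : tensor4 K 'I_n) : curvature_tensor x ->
  forall a b c d, x (a, b, c, d) = - x (b, a, c, d).
Proof. by move=> h a b c d; case: (h a b c d). Qed.
Lemma cA2 (K : fieldType) n (x : tensor4 K 'I_n) : curvature_tensor x ->
  forall a b c d, x (a, b, c, d) = - x (a, b, d, c).
Proof. by move=> h a b c d; case: (h a b c d) => _ []. Qed.
Lemma cB (K : fieldType) n (x : tensor4 K 'I_n) : curvature_tensor x ->
  forall a b c d, x (a, b, c, d) + x (b, c, a, d) + x (c, a, b, d) = 0.
Proof. by move=> h a b c d; case: (h a b c d) => _ []. Qed.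

Lemma cAA (K : fieldType) n (x : tensor4 K 'I_n) : curvature_tensor x ->
  forall a b c d, x (b, a, d, c) = x (a, b, c, d).
Proof. by move=> h a b c d; rewrite (cA1 h) (cA2 h) opprK. Qed.

Lemma cP (K : numFieldType) n (x : tensor4 K 'I_n) : curvature_tensor x ->
  forall a b c d, x (a, b, c, d) = x (c, d, a, b).
Proof.
move=> h b c a d.
have B1 := cB h a b c d.
have B2 := cB h b c d a.
have B3 := cB h c d a b.
have B4 := cB h d a b c.
rewrite (cA2 h b c d a) (cA2 h c d b a) (cAA h b d a c) in B2.
rewrite (cAA h a d b c) (cAA h c a b d) in B3.
rewrite (cA1 h d a b c) (cA2 h a b d c) in B4.
apply/eqP; rewrite -subr_eq0.
have: (x (b, c, a, d) - x (a, d, b, c)) *+ 2 == 0; last by rewrite mulrn_eq0.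
have -> : (x (b, c, a, d) - x (a, d, b, c)) *+ 2 =
  (x (a, b, c, d) + x (b, c, a, d) + x (c, a, b, d))
  - (- x (b, c, a, d) + - x (c, d, a, b) + x (b, d, a, c))
  - (x (c, d, a, b) + x (a, d, b, c) + x (c, a, b, d))
  + (- x (a, d, b, c) + - x (a, b, c, d) + x (b, d, a, c)) by ring.
by rewrite B1 B2 B3 B4 !subr0 addr0.
Qed.

Lemma GV1 (K : numFieldType) n (x : tensor4 K 'I_n) : curvature_tensor x ->
  forall y1 y2 y3 y4, G x y2 y1 y4 y3 = G x y1 y2 y3 y4.
Proof. move=> h y1 y2 y3 y4; rewrite /G (cAA h); ring. Qed.

Lemma GV2 (K : numFieldType) n (x : tensor4 K 'I_n) : curvature_tensor x ->
  forall y1 y2 y3 y4, G x y3 y4 y1 y2 = G x y1 y2 y3 y4.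
Proof.
move=> h y1 y2 y3 y4; rewrite /G (Ja _ y1.1 y3.1) (Ja _ y2.1 y4.1) -(cP h); ring.
Qed.

Lemma GV3 (K : numFieldType) n (x : tensor4 K 'I_n) : curvature_tensor x ->
  forall y1 y2 y3 y4, G x y4 y3 y2 y1 = G x y1 y2 y3 y4.
Proof. by move=> h y1 y2 y3 y4; rewrite (GV1 h y3 y4 y1 y2) (GV2 h). Qed.

Lemma phi_alt (K : numFieldType) n (x : tensor4 K 'I_n) : curvature_tensor x ->
  alternating4 (phiT x).
Proof.
move=> h y1 y2 y3 y4; rewrite !ffunE /=; split; last split; last by ring.
- rewrite (GV1 h y1 y2 y4 y3) (GV2 h y1 y4 y2 y3) (GV3 h y1 y3 y4 y2)
          (GV1 h y1 y2 y3 y4) (GV3 h y1 y4 y3 y2) (GV2 h y1 y3 y2 y4); ring.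
- ring.
Qed.

Lemma phi0011 (K : numFieldType) n (x : tensor4 K 'I_n) : curvature_tensor x ->
  forall i j k l, phiT x ((o0, i), (o0, j), (o1, k), (o1, l)) = 3 * x (i, j, k, l).
Proof.
move=> h i j k l; rewrite ffunE /G /= J00 J01 J10 J11.
have b := cB h k i l j.
rewrite (cA1 h k i l j) (cA1 h l k i j) (cP h k l i j) in b.
have e : x (i, l, k, j) = x (i, k, l, j) + x (i, j, k, l).
  by apply/eqP; rewrite -subr_eq0; apply/eqP; rewrite -b; ring.
rewrite e (cA2 h i j l k); ring.
Qed.

Definition bal n (y : ('I_2 * 'I_n) * ('I_2 * 'I_n) * ('I_2 * 'I_n) * ('I_2 * 'I_n)) : bool :=
  let '(y1, y2, y3, y4) := y in (nat_of_ord y1.1 + y2.1 + y3.1 + y4.1)%N == 2%N.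

Lemma phi_unbal (K : numFieldType) n (x : tensor4 K 'I_n) y : ~~ bal y -> phiT x y = 0.
Proof.
case: y => [[[[a1 i1] [a2 i2]] [a3 i3]] [a4 i4]].
case: (ord2P a1)=>->; case: (ord2P a2)=>->; case: (ord2P a3)=>->; case: (ord2P a4)=>->;
rewrite //= => _; rewrite ffunE /G /= ?J00 ?J01 ?J10 ?J11; ring.
Qed.

Lemma phi_lin (K : numFieldType) n (a : K) (x y : tensor4 K 'I_n) :
  phiT [ffun t => a * x t + y t] = [ffun t => a * phiT x t + phiT y t].
Proof.
apply/ffunP => [[[[y1 y2] y3] y4]]; rewrite !ffunE /= /G !ffunE; ring.
Qed.

Lemma gOg (K : numFieldType) (Om g : 'M[K]_2) : area_form Om ->
  g^T *m Om *m g = \det g *: Om.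
Proof.
case=> hT [hd _].
have h10 : Om o1 o0 = - Om o0 o1.
  by have := congr1 (fun M : 'M[K]_2 => M o0 o1) hT; rewrite !mxE.
apply/matrixP => i j; rewrite !mxE !sum2 !mxE !sum2 !mxE det22 h10 (hd o0) (hd o1).
by case: (ord2P i) => ->; case: (ord2P j) => ->; rewrite ?h10 ?(hd o0) ?(hd o1); ring.
Qed.

Lemma SL_det (K : numFieldType) (Om g : 'M[K]_2) : area_form Om -> in_SL Om g -> \det g = 1.
Proof.
move=> hO [_ hg]; have [_ [_ hnz]] := hO.
move: hg; rewrite gOg // => /eqP; rewrite -subr_eq0 -{2}[Om]scale1r -scalerBl scaler_eq0.
by rewrite (negbTE hnz) orbF subr_eq0 => /eqP.
Qed.

Lemma det_SL (K : numFieldType) (Om g : 'M[K]_2) : area_form Om -> \det g = 1 -> in_SL Om g.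
Proof.
move=> hO hd; split; first by rewrite unitmxE hd unitr1.
by rewrite gOg // hd scale1r.
Qed.

Lemma Jsum (K : numFieldType) (g : 'M[K]_2) a c :
  \sum_(b < 2) \sum_(d < 2) g a b * g c d * J K b d = \det g * J K a c.
Proof.
rewrite !sum2 det22 J00 J01 J10 J11.
by case: (ord2P a) => ->; case: (ord2P c) => ->; rewrite ?J00 ?J01 ?J10 ?J11; ring.
Qed.

Lemma Jinv (K : numFieldType) (g : 'M[K]_2) a c : \det g = 1 ->
  J K a c = \sum_(b < 2) \sum_(d < 2) g a b * g c d * J K b d.
Proof. by move=> hd; rewrite Jsum hd mul1r. Qed.

Lemma phi_inv (K : numFieldType) n (x : tensor4 K 'I_n) (g : 'M[K]_2) :
  \det g = 1 -> sl_act g (phiT x) = phiT x.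
Proof.
move=> hd; apply/ffunP => [[[[[a1 i1] [a2 i2]] [a3 i3]] [a4 i4]]].
rewrite !ffunE /= /G /=.
rewrite !(Jinv _ _ hd).
rewrite !sum2 /=.
rewrite !ffunE /= /G /= ?J00 ?J01 ?J10 ?J11.
ring.
Qed.

Definition S4 (K : numFieldType) m (F : 'I_m -> 'I_m -> 'I_m -> 'I_m -> K) : K :=
  \sum_(p < m) \sum_(q < m) \sum_(r < m) \sum_(s < m) F p q r s.

Lemma S4_qr (K : numFieldType) m (F F' : 'I_m -> 'I_m -> 'I_m -> 'I_m -> K) :
  (forall p q r s, F p q r s = F' p r q s) -> S4 F = S4 F'.
Proof.
move=> H; rewrite /S4; apply: eq_bigr => p _; rewrite exchange_big.
apply: eq_bigr => a _; apply: eq_bigr => b _; apply: eq_bigr => c _; exact: H.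
Qed.

Lemma S4_rs (K : numFieldType) m (F F' : 'I_m -> 'I_m -> 'I_m -> 'I_m -> K) :
  (forall p q r s, F p q r s = F' p q s r) -> S4 F = S4 F'.
Proof.
move=> H; rewrite /S4; apply: eq_bigr => p _; apply: eq_bigr => q _; rewrite exchange_big.
apply: eq_bigr => a _; apply: eq_bigr => b _; exact: H.
Qed.

Lemma S4_qs (K : numFieldType) m (F F' : 'I_m -> 'I_m -> 'I_m -> 'I_m -> K) :
  (forall p q r s, F p q r s = F' p s r q) -> S4 F = S4 F'.
Proof.
move=> H; rewrite /S4; apply: eq_bigr => p _; rewrite exchange_big.
under eq_bigr => r _ do rewrite exchange_big.
rewrite exchange_big.
apply: eq_bigr => a _; apply: eq_bigr => b _; apply: eq_bigr => c _; exact: H.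
Qed.

Lemma S4_c1 (K : numFieldType) m (F F' : 'I_m -> 'I_m -> 'I_m -> 'I_m -> K) :
  (forall p q r s, F p q r s = F' p s q r) -> S4 F = S4 F'.
Proof.
move=> H; rewrite /S4; apply: eq_bigr => p _.
under eq_bigr => q _ do rewrite exchange_big.
rewrite exchange_big.
apply: eq_bigr => a _; apply: eq_bigr => b _; apply: eq_bigr => c _; exact: H.
Qed.

Lemma S4_c2 (K : numFieldType) m (F F' : 'I_m -> 'I_m -> 'I_m -> 'I_m -> K) :
  (forall p q r s, F p q r s = F' p r s q) -> S4 F = S4 F'.
Proof.
move=> H; rewrite /S4; apply: eq_bigr => p _; rewrite exchange_big.
under eq_bigr => r _ do rewrite exchange_big.
apply: eq_bigr => a _; apply: eq_bigr => b _; apply: eq_bigr => c _; exact: H.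
Qed.

Lemma S4_ext (K : numFieldType) m (F F' : 'I_m -> 'I_m -> 'I_m -> 'I_m -> K) :
  (forall p q r s, F p q r s = F' p q r s) -> S4 F = S4 F'.
Proof.
move=> H; rewrite /S4; apply: eq_bigr => p _; apply: eq_bigr => q _.
apply: eq_bigr => r _; apply: eq_bigr => s _; exact: H.
Qed.

Lemma S4D (K : numFieldType) m (F F' : 'I_m -> 'I_m -> 'I_m -> 'I_m -> K) :
  S4 F + S4 F' = S4 (fun p q r s => F p q r s + F' p q r s).
Proof.
rewrite /S4 -big_split; apply: eq_bigr => p _; rewrite -big_split.
apply: eq_bigr => q _; rewrite -big_split; apply: eq_bigr => r _; rewrite -big_split //.
Qed.

Lemma S4N (K : numFieldType) m (F : 'I_m -> 'I_m -> 'I_m -> 'I_m -> K) :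
  - S4 F = S4 (fun p q r s => - F p q r s).
Proof.
rewrite /S4 -sumrN; apply: eq_bigr => p _; rewrite -sumrN.
apply: eq_bigr => q _; rewrite -sumrN; apply: eq_bigr => r _; rewrite -sumrN //.
Qed.

Lemma G_nat (K : numFieldType) m n (A : 'M[K]_(m, n)) (x : tensor4 K 'I_m) a1 a2 a3 a4 i1 i2 i3 i4 :
  G (pullR A x) (a1, i1) (a2, i2) (a3, i3) (a4, i4) =
  S4 (fun p q r s => A p i1 * A q i2 * A r i3 * A s i4 * G x (a1, p) (a2, q) (a3, r) (a4, s)).
Proof.
rewrite /G /= ffunE /S4 mulr_sumr; apply: eq_bigr => p _; rewrite mulr_sumr.
apply: eq_bigr => q _; rewrite mulr_sumr; apply: eq_bigr => r _; rewrite mulr_sumr.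
apply: eq_bigr => s _; rewrite /=; ring.
Qed.

Lemma phi_nat (K : numFieldType) m n (A : 'M[K]_(m, n)) (x : tensor4 K 'I_m) :
  phiT (pullR A x) = pullL A (phiT x).
Proof.
apply/ffunP => [[[[[a1 i1] [a2 i2]] [a3 i3]] [a4 i4]]].
rewrite [LHS]ffunE /= !G_nat.
pose B := fun p q r s => A p i1 * A q i2 * A r i3 * A s i4.
transitivity (S4 (fun p q r s => B p q r s * G x (a1, p) (a2, q) (a3, r) (a4, s))
  - S4 (fun p q r s => B p q r s * G x (a1, p) (a3, r) (a2, q) (a4, s))
  - S4 (fun p q r s => B p q r s * G x (a1, p) (a4, s) (a3, r) (a2, q))
  - S4 (fun p q r s => B p q r s * G x (a1, p) (a2, q) (a4, s) (a3, r))
  + S4 (fun p q r s => B p q r s * G x (a1, p) (a3, r) (a4, s) (a2, q))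
  + S4 (fun p q r s => B p q r s * G x (a1, p) (a4, s) (a2, q) (a3, r))).
  congr (_ - _ - _ - _ + _ + _);
    first [ by apply: S4_ext => p q r s; rewrite /B; ring
          | by apply: S4_qr => p q r s; rewrite /B; ring
          | by apply: S4_qs => p q r s; rewrite /B; ring
          | by apply: S4_rs => p q r s; rewrite /B; ring
          | by apply: S4_c1 => p q r s; rewrite /B; ring
          | by apply: S4_c2 => p q r s; rewrite /B; ring ].
rewrite !S4N !S4D ffunE /=.
apply: S4_ext => p q r s; rewrite ffunE /= /B; ring.
Qed.


Lemma A12 (K : numFieldType) (I : finType) (T : tensor4 K I) : alternating4 T ->
  forall y1 y2 y3 y4, T (y1, y2, y3, y4) = - T (y2, y1, y3, y4).
Proof. by move=> h y1 y2 y3 y4; case: (h y1 y2 y3 y4). Qed.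
Lemma A23 (K : numFieldType) (I : finType) (T : tensor4 K I) : alternating4 T ->
  forall y1 y2 y3 y4, T (y1, y2, y3, y4) = - T (y1, y3, y2, y4).
Proof. by move=> h y1 y2 y3 y4; case: (h y1 y2 y3 y4) => _ []. Qed.
Lemma A34 (K : numFieldType) (I : finType) (T : tensor4 K I) : alternating4 T ->
  forall y1 y2 y3 y4, T (y1, y2, y3, y4) = - T (y1, y2, y4, y3).
Proof. by move=> h y1 y2 y3 y4; case: (h y1 y2 y3 y4) => _ []. Qed.

Lemma eq_opp0 (K : numFieldType) (z : K) : z = - z -> z = 0.
Proof.
move=> h; apply/eqP; have : z *+ 2 == 0 by rewrite mulr2n {1}h addNr.
by rewrite mulrn_eq0.
Qed.

Lemma alt_eq (K : numFieldType) n (T1 T2 : tensor4 K ('I_2 * 'I_n)%type) :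
  alternating4 T1 -> alternating4 T2 ->
  (forall i j k l, T1 ((o0, i), (o0, j), (o1, k), (o1, l)) = T2 ((o0, i), (o0, j), (o1, k), (o1, l))) ->
  (forall y, ~~ bal y -> T1 y = T2 y) -> T1 = T2.
Proof.
move=> h1 h2 E U; apply/ffunP => y.
case hb: (bal y); last by apply: U; rewrite hb.
move: hb; case: y => [[[[a1 i1] [a2 i2]] [a3 i3]] [a4 i4]].
case: (ord2P a1)=>->; case: (ord2P a2)=>->; case: (ord2P a3)=>->; case: (ord2P a4)=>->;
rewrite //= => _;
first [ by rewrite E
      | by rewrite (A23 h1) (A23 h2) E
      | by rewrite (A34 h1) (A34 h2) (A23 h1) (A23 h2) E
      | by rewrite (A12 h1) (A12 h2) (A23 h1) (A23 h2) E
      | by rewrite (A12 h1) (A12 h2) (A34 h1) (A34 h2) (A23 h1) (A23 h2) E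
      | by rewrite (A23 h1) (A23 h2) (A12 h1) (A12 h2) (A34 h1) (A34 h2) (A23 h1) (A23 h2) E ].
Qed.

Definition umx (K : numFieldType) : 'M[K]_2 :=
  \matrix_(i < 2, j < 2) (if (val i == 1%N) && (val j == 0%N) then 0 else 1).
Definition lmx (K : numFieldType) : 'M[K]_2 :=
  \matrix_(i < 2, j < 2) (if (val i == 0%N) && (val j == 1%N) then 0 else 1).

Lemma det_umx (K : numFieldType) : \det (umx K) = 1.
Proof. by rewrite det22 !mxE /= mulr1 mulr0 subr0. Qed.
Lemma det_lmx (K : numFieldType) : \det (lmx K) = 1.
Proof. by rewrite det22 !mxE /= mulr1 mul0r subr0. Qed.

Lemma addK0 (K : numFieldType) (a b : K) : a + b = a -> b = 0.
Proof. by move=> h; rewrite -(addKr a b) h addNr. Qed.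

Lemma symanti0 (K : numFieldType) n (f : 'I_n -> 'I_n -> 'I_n -> 'I_n -> K) :
  (forall a b c d, f a b c d = f b a c d) -> (forall a b c d, f a b c d = - f a c b d) ->
  forall a b c d, f a b c d = 0.
Proof.
move=> s t i j k l; apply: eq_opp0.
rewrite {1}(s i j k l) (t j i k l) (s j k i l) (t k j i l) (s k i j l) (t i k j l).
by rewrite !opprK.
Qed.

Lemma vanish (K : numFieldType) n (Om : 'M[K]_2) (T : tensor4 K ('I_2 * 'I_n)%type) :
  area_form Om -> alternating4 T -> sl_invariant Om T -> forall y, ~~ bal y -> T y = 0.
Proof.
move=> hO hT hI.
have hu := hI _ (det_SL hO (det_umx K)).
have hl := hI _ (det_SL hO (det_lmx K)).
have P4 : forall i j k l, T ((o1, i), (o1, j), (o1, k), (o1, l)) = 0.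
  move=> i j k l.
  have E : sl_act (umx K) T ((o0, i), (o1, j), (o1, k), (o1, l)) = T ((o0, i), (o1, j), (o1, k), (o1, l)) by rewrite hu.
  rewrite /= ffunE /= !sum2 !mxE /= in E.
  rewrite ?mul1r ?mulr1 ?mul0r ?mulr0 ?add0r ?addr0 in E.
  exact: addK0 E.
have P0 : forall i j k l, T ((o0, i), (o0, j), (o0, k), (o0, l)) = 0.
  move=> i j k l.
  have E : sl_act (lmx K) T ((o1, i), (o0, j), (o0, k), (o0, l)) = T ((o1, i), (o0, j), (o0, k), (o0, l)) by rewrite hl.
  rewrite /= ffunE /= !sum2 !mxE /= in E.
  rewrite ?mul1r ?mulr1 ?mul0r ?mulr0 ?add0r ?addr0 in E.
  by move: E; rewrite addrC => /addK0.
have W0 : forall i j k l, T ((o0, i), (o1, j), (o1, k), (o1, l)) = 0.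
  have F : forall i j k l, T ((o0, i), (o1, j), (o1, k), (o1, l)) + T ((o1, i), (o0, j), (o1, k), (o1, l)) = 0.
    move=> i j k l.
    have E : sl_act (umx K) T ((o0, i), (o0, j), (o1, k), (o1, l)) = T ((o0, i), (o0, j), (o1, k), (o1, l)) by rewrite hu.
    rewrite /= ffunE /= !sum2 !mxE /= in E.
    rewrite ?mul1r ?mulr1 ?mul0r ?mulr0 ?add0r ?addr0 P4 addr0 in E.
    apply: (@addK0 _ (T ((o0, i), (o0, j), (o1, k), (o1, l)))); rewrite -[RHS]E; ring.
  apply: (@symanti0 _ _ (fun a b c d => T ((o0, a), (o1, b), (o1, c), (o1, d)))) => a b c d /=.
    have := F a b c d; rewrite (A12 hT (o1, a) (o0, b)) => h.
    by apply/eqP; rewrite -subr_eq0; apply/eqP.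
  exact: A23.
have V0 : forall i j k l, T ((o0, i), (o0, j), (o0, k), (o1, l)) = 0.
  have F : forall i j k l, T ((o0, i), (o1, j), (o0, k), (o0, l)) + T ((o1, i), (o0, j), (o0, k), (o0, l)) = 0.
    move=> i j k l.
    have E : sl_act (lmx K) T ((o1, i), (o1, j), (o0, k), (o0, l)) = T ((o1, i), (o1, j), (o0, k), (o0, l)) by rewrite hl.
    rewrite /= ffunE /= !sum2 !mxE /= in E.
    rewrite ?mul1r ?mulr1 ?mul0r ?mulr0 ?add0r ?addr0 P0 add0r in E.
    apply: (@addK0 _ (T ((o1, i), (o1, j), (o0, k), (o0, l)))); rewrite -[RHS]E; ring.
  pose f a b c d := T ((o0, a), (o0, b), (o0, c), (o1, d)).
  have s14 : forall a b c d, f a b c d = f d b c a.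
    move=> a b c d; have := F a d b c.
    rewrite (A23 hT (o0, a)) (A34 hT (o0, a)) (A12 hT (o1, a)) (A23 hT (o0, d)) (A34 hT (o0, d)).
    rewrite !opprK => h; rewrite /f; apply/eqP; rewrite -subr_eq0; apply/eqP; rewrite -h; ring.
  have a12 : forall a b c d, f a b c d = - f b a c d by move=> a b c d; exact: A12.
  move=> i j k l; rewrite -/(f i j k l); apply: eq_opp0.
  rewrite {1}(s14 i j k l) (a12 l j k i) (s14 j l k i) (a12 i l k j) (s14 l i k j) (a12 j i k l).
  by rewrite !opprK.
case => [[[[a1 i1] [a2 i2]] [a3 i3]] [a4 i4]].
case: (ord2P a1)=>->; case: (ord2P a2)=>->; case: (ord2P a3)=>->; case: (ord2P a4)=>->;
rewrite //= => _;
first [ by rewrite P0 | by rewrite P4 | by rewrite V0 | by rewrite W0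
      | by rewrite (A34 hT) V0 ?oppr0
      | by rewrite (A23 hT) (A34 hT) V0 ?oppr0
      | by rewrite (A12 hT) (A23 hT) (A34 hT) V0 ?oppr0
      | by rewrite (A12 hT) W0 ?oppr0
      | by rewrite (A23 hT) (A12 hT) W0 ?oppr0
      | by rewrite (A34 hT) (A23 hT) (A12 hT) W0 ?oppr0 ].
Qed.


Lemma phi_surj (K : numFieldType) n (Om : 'M[K]_2) (T : tensor4 K ('I_2 * 'I_n)%type) :
  area_form Om -> alternating4 T -> sl_invariant Om T ->
  exists x, curvature_tensor x /\ phiT x = T.
Proof.
move=> hO hT hI.
have hu := hI _ (det_SL hO (det_umx K)).
pose S a b c d : K := T ((o0, a), (o0, b), (o1, c), (o1, d)).
pose x : tensor4 K 'I_n := [ffun t => let '(a, b, c, d) := t in (3^-1 : K) * S a b c d].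
have hx : curvature_tensor x.
  move=> a b c d; rewrite !ffunE /S; split; last split.
  - by rewrite (A12 hT (o0, a)) mulrN.
  - by rewrite (A34 hT (o0, a)) mulrN.
  have E : sl_act (umx K) T ((o0, a), (o0, b), (o0, c), (o1, d)) = T ((o0, a), (o0, b), (o0, c), (o1, d)) by rewrite hu.
  rewrite /= ffunE /= !sum2 !mxE /= in E.
  rewrite ?mul1r ?mulr1 ?mul0r ?mulr0 ?add0r ?addr0 in E.
  rewrite (vanish hO hT hI (y := ((o0, a), (o0, b), (o0, c), (o1, d))) isT)
          (vanish hO hT hI (y := ((o0, a), (o1, b), (o1, c), (o1, d))) isT)
          (vanish hO hT hI (y := ((o1, a), (o0, b), (o1, c), (o1, d))) isT)
          (vanish hO hT hI (y := ((o1, a), (o1, b), (o0, c), (o1, d))) isT)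
          (vanish hO hT hI (y := ((o1, a), (o1, b), (o1, c), (o1, d))) isT) in E.
  rewrite (A23 hT (o0, a) (o1, b)) (A12 hT (o0, a) (o0, c)) (A12 hT (o1, a) (o0, b))
          (A23 hT (o0, b) (o1, a)) !opprK in E.
  rewrite -!mulrDr; apply/eqP; rewrite mulf_eq0; apply/orP; right; apply/eqP.
  rewrite -E; ring.
exists x; split => //.
have h3 : (3 : K) != 0 by rewrite pnatr_eq0.
apply: alt_eq.
- exact: phi_alt.
- exact: hT.
- by move=> i j k l; rewrite phi0011 // ffunE /S mulVKf.
- by move=> y hy; rewrite phi_unbal // (vanish hO hT hI hy).
Qed.


Unset Implicit Arguments.

Theorem proposition1 (R : realType) (b : bool)
    (Om : 'M[scalar_field R b]_2) :
  area_form Om ->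
  exists phi : forall n : nat,
      tensor4 (scalar_field R b) 'I_n ->
      tensor4 (scalar_field R b) ('I_2 * 'I_n)%type,
    (* linear on R(V) *)
    (forall n (a : scalar_field R b) (x y : tensor4 (scalar_field R b) 'I_n),
        curvature_tensor x -> curvature_tensor y ->
        phi n [ffun t => a * x t + y t] = [ffun t => a * phi n x t + phi n y t]) /\
    (* maps R(V) into Lambda^4(U (x) V^* )^{SL(U)} *)
    (forall n (x : tensor4 (scalar_field R b) 'I_n), curvature_tensor x ->
        alternating4 (phi n x) /\ sl_invariant Om (phi n x)) /\
    (* injective on R(V) *)
    (forall n (x y : tensor4 (scalar_field R b) 'I_n),
        curvature_tensor x -> curvature_tensor y -> phi n x = phi n y -> x = y) /\
    (* onto the invariants *)
    (forall n (T : tensor4 (scalar_field R b) ('I_2 * 'I_n)%type),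
        alternating4 T -> sl_invariant Om T ->
        exists x, curvature_tensor x /\ phi n x = T) /\
    (* natural in V *)
    (forall m n (A : 'M[scalar_field R b]_(m, n)) (x : tensor4 (scalar_field R b) 'I_m),
        curvature_tensor x -> phi n (pullR A x) = pullL A (phi m x)).
Proof.
Proof.
move=> hO.
have h3 : (3 : scalar_field R b) != 0 by rewrite pnatr_eq0.
exists (fun n => @phiT _ n); split; [|split; [|split; [|split]]].
- by move=> n a x y _ _; exact: phi_lin.
- move=> n x hx; split; first exact: phi_alt.
  by move=> g hg; apply: phi_inv; exact: SL_det hO hg.
- move=> n x y hx hy e; apply/ffunP => [[[[i j] k] l]].
  have := phi0011 hx i j k l; rewrite e (phi0011 hy) => /(mulfI h3) ->.
  by [].
- by move=> n T hT hI; exact: phi_surj hO hT hI.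
- by move=> m n A x _; exact: phi_nat.
Qed.
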